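(* Let $n\ge3$ and let $Z=(z_1,\dots,z_n)$ be a non-degenerate $n$-gon. Then the 1-forms $\alpha_i=[z_{i+1}-z_i,\,dz_{i+1}+dz_i]$, $i=1,\dots,n$, are linearly independent at $Z$, and the intersection of their kernels at $Z$ equals the fiber $F(Z)$ of the dual Birkhoff distribution $\mathcal F$ at $Z$.
   Context: $[\cdot,\cdot]$ is the determinant of two plane vectors; for $z=(x,y)$, $[z_1,dz_2]$ denotes the 1-form $x_1dy_2-y_1dx_2$. Indices are cyclic. $G_n$ is the set of $n$-gons $(z_1,\dots,z_n)\in(\mathbb R^2)^n$ with $z_i\neq z_{i+1}$ for all $i$. An $n$-gon is non-degenerate if no three consecutive vertices $z_{i-1},z_i,z_{i+1}$ are collinear; the set of these is $U_n\subset G_n$. The dual Birkhoff distribution $\mathcal F$ on $G_n$: a tangent vector $W=(w_1,\dots,w_n)$ (velocities of the vertices) lies in $\mathcal F$ iff for each $i$ the induced motion of the line $z_iz_{i+1}$ is an infinitesimal rotation about the midpoint of $z_iz_{i+1}$; $\mathcal F$ is $n$-dimensional, and $W\in\mathcal F$ iff $[w_i+w_{i+1},z_{i+1}-z_i]=0$ for all $i$. *)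

(* Defs.v *)
From mathcomp Require Import all_boot all_order all_algebra.
Set Implicit Arguments. Unset Strict Implicit. Unset Printing Implicit Defensive.
Import Order.TTheory GRing.Theory Num.Theory.
Local Open Scope ring_scope.

Section Defs.
Variable R : realFieldType.

Definition pt := (R * R)%type.
Definition padd (u v : pt) : pt := (u.1 + v.1, u.2 + v.2).
Definition psub (u v : pt) : pt := (u.1 - v.1, u.2 - v.2).
(* [u, v] = determinant of two plane vectors *)
Definition det2 (u v : pt) : R := u.1 * v.2 - u.2 * v.1.

Variable n : nat.
Definition nxt (i : 'I_n) : 'I_n := ordS i.
Definition prv (i : 'I_n) : 'I_n := ord_pred i.

(* an n-gon: vertices z_i, i in 'I_n; a tangent vector W: velocities w_i *)
Definition in_Gn (Z : 'I_n -> pt) : Prop := forall i, Z i <> Z (nxt i).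

Definition collinear3 (a b c : pt) : Prop := det2 (psub b a) (psub c a) = 0.

Definition nondeg_gon (Z : 'I_n -> pt) : Prop :=
  in_Gn Z /\ forall i, ~ collinear3 (Z (prv i)) (Z i) (Z (nxt i)).

(* the 1-form alpha_i = [z_{i+1} - z_i, dz_{i+1} + dz_i] at Z, evaluated on W *)
Definition alphaB (Z : 'I_n -> pt) (i : 'I_n) (W : 'I_n -> pt) : R :=
  det2 (psub (Z (nxt i)) (Z i)) (padd (W (nxt i)) (W i)).

Definition dualBirkhoffF (Z : 'I_n -> pt) (W : 'I_n -> pt) : Prop :=
  forall i, det2 (padd (W i) (W (nxt i))) (psub (Z (nxt i)) (Z i)) = 0.

End Defs.

(* Main.v *)
Require Import Defs.
From mathcomp Require Import all_boot all_order all_algebra.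
From mathcomp Require Import zify ring lra.
Import Order.TTheory GRing.Theory Num.Theory.
Local Open Scope ring_scope.

Lemma nxt_neq (n : nat) (j : 'I_n) : (2 <= n)%N -> nxt j != j.
Proof.
move=> hn; apply/eqP => /(congr1 val) /=.
have := ltn_ord j.
case: (ltnP j.+1 n) => h1 h2.
  by rewrite modn_small //; lia.
have -> : j.+1 = n by lia.
by rewrite modnn; lia.
Qed.

Theorem lemma2p2 (R : realFieldType) (n : nat) (Z : 'I_n -> pt R) :
  (3 <= n)%N -> nondeg_gon Z ->
  (* the forms alpha_1, ..., alpha_n are linearly independent at Z *)
  (forall c : 'I_n -> R,
      (forall W : 'I_n -> pt R, \sum_(i < n) c i * alphaB Z i W = 0) ->
      forall i, c i = 0)
  /\
  (* the intersection of their kernels is the fiber F(Z) *)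
  (forall W : 'I_n -> pt R,
      (forall i, alphaB Z i W = 0) <-> dualBirkhoffF Z W).
Proof.
move=> hn [hG hND]; split; last first.
  move=> W; split=> H i; move: (H i); rewrite /alphaB /det2 /padd /psub /=.
    by move=> e; rewrite -[RHS]oppr0 -e; ring.
  by move=> e; rewrite -[RHS]oppr0 -e; ring.
move=> c Hc j.
pose d := psub (Z j) (Z (prv j)).
pose W := fun k : 'I_n => if k == j then d else (0, 0) : pt R.
have key : forall i, c i * alphaB Z i W =
   if i == j then c j * det2 (psub (Z (nxt j)) (Z j)) d else 0.
  move=> i; rewrite /alphaB /W.
  have hnj := @nxt_neq n j (ltnW hn).
  case: (eqVneq i j) => [->|hij].
    by rewrite ?eqxx (negbTE hnj) /padd /det2 /=; ring.
  rewrite ?(negbTE hij).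
  case: (eqVneq (nxt i) j) => [hi|hi].
    rewrite ?hi ?eqxx.
    have -> : i = prv j by rewrite -hi /prv /nxt ordSK.
    by rewrite /d /padd /psub /det2 /=; ring.
  by rewrite ?(negbTE hi) /padd /det2 /=; ring.
have := Hc W; rewrite (eq_bigr _ (fun i _ => key i)) -big_mkcond big_pred1_eq.
move/eqP; rewrite mulf_eq0 => /orP [/eqP //|/eqP hd].
exfalso; apply: (hND j); rewrite /collinear3.
move: hd; rewrite /d /psub /det2 /= => hd.
by rewrite -[RHS]oppr0 -hd; ring.
Qed.
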